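(* Let $R$ be a commutative ring with identity and $M$ a non-zero comultiplication $R$-module with $G'(M)$ non-null and $|\mathrm{Min}(M)|<\infty$. Then the independence number of $G'(M)$ equals $|\mathrm{Min}(M)|$.
   Context: An $R$-module $M$ is a comultiplication module if for every submodule $N$ of $M$ there is an ideal $I$ of $R$ with $N=\mathrm{Ann}_M(I)$. A submodule $N$ of $M$ is large if $N\cap L\neq 0$ for every non-zero submodule $L$ of $M$. $\mathrm{Min}(M)$ is the set of minimal submodules of $M$. The large sum graph $G'(M)$ has as vertex set the set of all non-zero non-large submodules of $M$, and two distinct vertices $N,K$ are adjacent iff $N+K$ is non-large in $M$. The independence number $\alpha(G)$ is the maximum size of a set of pairwise non-adjacent vertices of $G$. *)

(* Defs.v *)
From HB Require Import structures.
From mathcomp Require Import all_boot all_order all_algebra.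
Set Implicit Arguments. Unset Strict Implicit. Unset Printing Implicit Defensive.
Import GRing.Theory.
Local Open Scope ring_scope.

Section ModDefs.
Variables (R : comNzRingType) (M : lmodType R).

Definition sub_eq (A B : M -> Prop) : Prop := forall x, A x <-> B x.

Definition is_submodule (N : M -> Prop) : Prop :=
  [/\ N 0, (forall x y, N x -> N y -> N (x + y))
    & (forall (r : R) x, N x -> N (r *: x))].

Definition is_ideal (I : R -> Prop) : Prop :=
  [/\ I 0, (forall a b, I a -> I b -> I (a + b))
    & (forall r a, I a -> I (r * a))].

Definition annM (I : R -> Prop) : M -> Prop :=
  fun m => forall r, I r -> r *: m = 0.

Definition comultiplication : Prop :=
  forall N, is_submodule N -> exists I, is_ideal I /\ sub_eq N (annM I).

Definition nonzero_sub (N : M -> Prop) : Prop := exists x, N x /\ x <> 0.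

Definition sub_sum (N K : M -> Prop) : M -> Prop :=
  fun m => exists x y, N x /\ K y /\ m = x + y.

Definition large (N : M -> Prop) : Prop :=
  forall L, is_submodule L -> nonzero_sub L ->
    exists x, N x /\ L x /\ x <> 0.

Definition minimal_submodule (N : M -> Prop) : Prop :=
  [/\ is_submodule N, nonzero_sub N &
    forall L, is_submodule L -> nonzero_sub L ->
      (forall x, L x -> N x) -> sub_eq L N].

(* Large sum graph G'(M) *)
Definition lsg_vertex (N : M -> Prop) : Prop :=
  [/\ is_submodule N, nonzero_sub N & ~ large N].

Definition lsg_adj (N K : M -> Prop) : Prop :=
  [/\ lsg_vertex N, lsg_vertex K, ~ sub_eq N K & ~ large (sub_sum N K)].

Definition lsg_nonnull : Prop := exists N K, lsg_adj N K.

Definition lsg_independent (k : nat) (f : 'I_k -> M -> Prop) : Prop :=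
  [/\ forall i, lsg_vertex (f i),
      (forall i j, i != j -> ~ sub_eq (f i) (f j))
    & (forall i j, ~ lsg_adj (f i) (f j))].

Definition lsg_independence_number_eq (n : nat) : Prop :=
  (exists f : 'I_n -> M -> Prop, lsg_independent f) /\
  (forall k (f : 'I_k -> M -> Prop), lsg_independent f -> (k <= n)%N).

Definition min_card_eq (n : nat) : Prop :=
  exists f : 'I_n -> M -> Prop,
    [/\ forall i, minimal_submodule (f i),
        (forall N, minimal_submodule N -> exists i, sub_eq N (f i))
      & (forall i j, sub_eq (f i) (f j) -> i = j)].

End ModDefs.

(* Main.v *)
Require Import Defs.
From HB Require Import structures.
From mathcomp Require Import all_boot all_order all_algebra.
From mathcomp Require classical_sets boolp.
From Stdlib Require Import Classical ClassicalEpsilon.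
Set Implicit Arguments. Unset Strict Implicit. Unset Printing Implicit Defensive.
Import GRing.Theory.
Local Open Scope ring_scope.

Lemma max_ideal (R : comNzRingType) (J : R -> Prop) : is_ideal J -> ~ J 1 ->
  exists m : R -> Prop, [/\ is_ideal m, ~ m 1, (forall r, J r -> m r) &
    forall m', is_ideal m' -> ~ m' 1 -> (forall r, m r -> m' r) -> forall r, m' r -> m r].
Proof.
move=> [J0 JD JM] J1.
pose P := fun I : R -> Prop => (forall r, ~ I r) \/
   ([/\ is_ideal I, ~ I 1 & forall r, J r -> I r]).
have := @classical_sets.Zorn_bigcup R P.
case.
- move=> F FP Ftot.
  case: (classic (exists X, F X /\ exists r, X r)) => [[X [FX [r Xr]]]|Hno]; last first.
    left=> r [X FX Xr]; apply: Hno; exists X; split => //; by exists r.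
  have ideal_of : forall Y, F Y -> forall r, Y r -> [/\ is_ideal Y, ~ Y 1 & forall r, J r -> Y r].
    move=> Y FY s Ys; case: (FP Y FY) => // H; by case: (H s).
  have [[Y0 YD YM] Y1 JY] := ideal_of X FX r Xr.
  right; split.
  + split.
    * by exists X => //; apply: Y0.
    * move=> a b [A FA Aa] [B FB Bb].
      case: (Ftot A B FA FB) => [AB|BA].
      - have [[_ BD _] _ _] := ideal_of B FB b Bb.
        by exists B => //; apply: BD => //; apply: AB.
      - have [[_ AD _] _ _] := ideal_of A FA a Aa.
        by exists A => //; apply: AD => //; apply: BA.
    * move=> s a [A FA Aa]; have [[_ _ AM] _ _] := ideal_of A FA a Aa.
      by exists A => //; apply: AM.
  + move=> [A FA A1]; have [_ H _] := ideal_of A FA 1 A1; exact: H A1.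
  + move=> s Js; exists X => //; exact: JY.
- move=> A [PA Amax].
  case: PA => [A0|[Aid A1 JA]].
    exfalso; apply: (Amax J); last by right.
    split; first by move=> t At; case: (A0 t).
    move=> H; exact: (A0 0) (H 0 J0).
  exists A; split => // m' m'id m'1 Am' r m'r.
  apply: NNPP => Ar.
  apply: (Amax m'); last by right; split => // s Js; apply: Am'; apply: JA.
  split; first exact: Am'.
  move=> H; exact: Ar (H r m'r).
Qed.

Definition AnnR (R : comNzRingType) (M : lmodType R) (N : M -> Prop) : R -> Prop :=
  fun r => forall x, N x -> r *: x = 0.

Lemma annM_sub (R : comNzRingType) (M : lmodType R) (I : R -> Prop) :
  is_submodule (@annM R M I).
Proof.
split.
- by move=> r _; rewrite scaler0.
- by move=> x y Hx Hy r Ir; rewrite scalerDr Hx // Hy // addr0.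
- by move=> c x Hx r Ir; rewrite scalerA mulrC -scalerA Hx // scaler0.
Qed.

Lemma ann_ann (R : comNzRingType) (M : lmodType R) (N : M -> Prop) :
  comultiplication M -> is_submodule N -> forall x, annM (AnnR N) x -> N x.
Proof.
move=> hc hN x Hx; have [I [_ HI]] := hc N hN.
apply (HI x).2 => r Ir; apply: Hx => y Ny; by apply (HI y).1.
Qed.

Lemma min_cyc (R : comNzRingType) (M : lmodType R) (S : M -> Prop) :
  minimal_submodule S -> forall t s, S t -> t <> 0 -> S s -> exists c, s = c *: t.
Proof.
move=> [[S0 SD SZ] _ Smin] t s St t0 Ss.
pose L := fun z : M => exists c, z = c *: t.
have HL : is_submodule L.
  split.
  - by exists 0; rewrite scale0r.
  - by move=> x y [a ->] [b ->]; exists (a + b); rewrite scalerDl.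
  - by move=> r x [a ->]; exists (r * a); rewrite scalerA.
have HE : sub_eq L S.
  apply: Smin HL _ _.
  - by exists t; split => //; exists 1; rewrite scale1r.
  - by move=> x [a ->]; apply: SZ.
exact: (HE s).2 Ss.
Qed.

Lemma min_nz (R : comNzRingType) (M : lmodType R) (S : M -> Prop) :
  minimal_submodule S -> forall a s t, S s -> a *: s <> 0 -> S t -> t <> 0 -> a *: t <> 0.
Proof.
move=> hS a s t Ss As St t0 At.
have [c Hc] := min_cyc hS St t0 Ss.
apply: As; by rewrite Hc scalerA mulrC -scalerA At scaler0.
Qed.

Lemma not_sub_ann (R : comNzRingType) (M : lmodType R) (N S : M -> Prop) :
  comultiplication M -> is_submodule N -> ~ (forall x, S x -> N x) ->
  exists a s, AnnR N a /\ S s /\ a *: s <> 0.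
Proof.
move=> hc hN H.
apply: NNPP => H2; apply: H => x Sx; apply: (ann_ann hc hN) => r Hr.
apply: NNPP => H3; apply: H2; exists r, x; split => //.
Qed.

Lemma sum_sub (R : comNzRingType) (M : lmodType R) (N K : M -> Prop) :
  is_submodule N -> is_submodule K -> is_submodule (sub_sum N K).
Proof.
move=> [N0 ND NZ] [K0 KD KZ]; split.
- by exists 0, 0; rewrite addr0.
- move=> _ _ [x1 [y1 [N1 [K1 ->]]]] [x2 [y2 [N2 [K2 ->]]]].
  exists (x1 + x2), (y1 + y2); split; first exact: ND.
  split; first exact: KD.
  by rewrite addrACA.
- move=> r _ [x [y [Nx [Ky ->]]]]; exists (r *: x), (r *: y).
  by rewrite scalerDr; split; [exact: NZ | split; [exact: KZ|]].
Qed.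

Lemma min_union (R : comNzRingType) (M : lmodType R) (N K S : M -> Prop) :
  comultiplication M -> is_submodule N -> is_submodule K -> minimal_submodule S ->
  (forall x, S x -> sub_sum N K x) ->
  (forall x, S x -> N x) \/ (forall x, S x -> K x).
Proof.
move=> hc hN hK hS HS.
apply: NNPP => H.
have HN : ~ (forall x, S x -> N x) by move=> H1; apply: H; left.
have HK : ~ (forall x, S x -> K x) by move=> H1; apply: H; right.
have [a [s [Aa [Ss As]]]] := not_sub_ann hc hN HN.
have [b [s' [Bb [Ss' Bs']]]] := not_sub_ann hc hK HK.
have s'0 : s' <> 0 by move=> E; apply: Bs'; rewrite E scaler0.
have As' : a *: s' <> 0 := min_nz hS Ss As Ss' s'0.
have [[S0 SD SZ] _ _] := hS.
have := min_nz hS Ss' Bs' (SZ a s' Ss') As'.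
have [x [y [Nx [Ky E]]]] := HS s' Ss'.
rewrite E !scalerDr (Aa x Nx) scaler0 add0r.
by rewrite scalerA mulrC -scalerA (Bb y Ky) scaler0.
Qed.

Lemma exists_min (R : comNzRingType) (M : lmodType R) (N : M -> Prop) :
  comultiplication M -> is_submodule N -> nonzero_sub N ->
  exists S, minimal_submodule S /\ forall x, S x -> N x.
Proof.
move=> hc [N0 ND Nsc] [x [Nx x0]].
pose J := fun r : R => r *: x = 0.
have HJ : is_ideal J.
  split.
  - by rewrite /J scale0r.
  - by move=> a b Ha Hb; rewrite /J scalerDl Ha Hb addr0.
  - by move=> r a Ha; rewrite /J -scalerA Ha scaler0.
have J1 : ~ J 1 by rewrite /J scale1r.
have [m [[m0 mD mM] m1 Jm mmax]] := max_ideal HJ J1.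
pose L := fun z : M => exists r, m r /\ z = r *: x.
have HL : is_submodule L.
  split.
  - by exists 0; rewrite scale0r.
  - move=> _ _ [a [ma ->]] [b [mb ->]]; exists (a + b); split; first exact: mD.
    by rewrite scalerDl.
  - move=> r _ [a [ma ->]]; exists (r * a); split; first exact: mM.
    by rewrite scalerA.
have [I [_ HI]] := hc L HL.
have nLx : ~ annM I x.
  move=> /(HI x).2 [r [mr E]]; apply: m1.
  have E2 : J (1 - r) by rewrite /J scalerBl scale1r -E subrr.
  have := mD r (1 - r) mr (Jm _ E2); by rewrite addrC subrK.
have [i [Ii ix0]] : exists i, I i /\ i *: x <> 0.
  apply: NNPP => H; apply: nLx => r Ir; apply: NNPP => H2; apply: H; by exists r.
pose y := i *: x.
have my : forall r, m r -> r *: y = 0.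
  move=> r mr; rewrite /y scalerA mulrC -scalerA.
  by apply: (HI (r *: x)).1 => //; exists r.
pose S := fun z : M => exists c, z = c *: y.
exists S; split; last first.
  by move=> _ [c ->]; apply Nsc; apply Nsc.
split.
- split.
  + by exists 0; rewrite scale0r.
  + by move=> _ _ [a ->] [b ->]; exists (a + b); rewrite scalerDl.
  + by move=> r _ [a ->]; exists (r * a); rewrite scalerA.
- by exists y; split => //; exists 1; rewrite scale1r.
move=> L' [L'0 L'D L'Z] [w [L'w w0]] L'S z; split; first exact: L'S.
move=> [c ->].
have [s Ews] := L'S w L'w.
pose m' := fun t : R => exists u a, m u /\ t = u + a * s.
have Hm' : is_ideal m'.
  split.
  - by exists 0, 0; split => //; rewrite mul0r addr0.
  - move=> _ _ [u1 [a1 [mu1 ->]]] [u2 [a2 [mu2 ->]]].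
    exists (u1 + u2), (a1 + a2); split; first exact: mD.
    by rewrite mulrDl addrACA.
  - move=> r _ [u [a [mu ->]]]; exists (r * u), (r * a); split; first exact: mM.
    by rewrite mulrDr mulrA.
have mm' : forall r, m r -> m' r by move=> r mr; exists r, 0; rewrite mul0r addr0.
have m'1 : m' 1.
  apply: NNPP => H.
  have ms : m s by apply: (mmax m' Hm' H mm'); exists 0, 1; rewrite add0r mul1r.
  by apply: w0; rewrite Ews my.
have [u [a [mu E1]]] := m'1.
have Ey : y = a *: w by rewrite -[y]scale1r E1 scalerDl my // add0r Ews scalerA.
by rewrite Ey scalerA; apply: L'Z.
Qed.

Lemma contains_of_large (R : comNzRingType) (M : lmodType R) (N S : M -> Prop) :
  is_submodule N -> large N -> minimal_submodule S -> forall x, S x -> N x.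
Proof.
move=> [N0 ND Nsc] hL [[S0 SD Ssc] Snz Smin].
pose L := fun z : M => S z /\ N z.
have HL : is_submodule L.
  split.
  - by split.
  - by move=> a b [Sa Na] [Sb Nb]; split; [apply: SD | apply: ND].
  - by move=> r a [Sa Na]; split; [apply: Ssc | apply: Nsc].
have [z [Nz [Sz z0]]] := hL S (And3 S0 SD Ssc) Snz.
have HE : sub_eq L S.
  apply: Smin HL _ _; first by exists z.
  by move=> a [].
by move=> x Sx; have [] := (HE x).2 Sx.
Qed.

Lemma large_of_contains (R : comNzRingType) (M : lmodType R) (n : nat)
  (g : 'I_n -> M -> Prop) (N : M -> Prop) :
  comultiplication M ->
  (forall S, minimal_submodule S -> exists i, sub_eq S (g i)) ->
  (forall k x, g k x -> N x) -> large N.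
Proof.
move=> hc hg HN L HL HLnz.
have [S [Smin SL]] := exists_min hc HL HLnz.
have [k Hk] := hg S Smin.
have [_ [z [Sz z0]] _] := Smin.
exists z; split => //; last by split => //; apply: SL.
by apply: (HN k); apply (Hk z).1.
Qed.

Theorem theorem3p4 (R : comNzRingType) (M : lmodType R) (n : nat)
  (hcomul : comultiplication M)
  (hnz : exists m : M, m <> 0%R)
  (hnonnull : lsg_nonnull M)
  (hmin : min_card_eq M n) :
  lsg_independence_number_eq M n.
Proof.
move: hmin => [g [gmin gall ginj]].
have gsub : forall i j, (forall x, g i x -> g j x) -> i = j.
  move=> i j H; apply: ginj.
  have [Hi Hinz _] := gmin i.
  have [_ _ Hjmin] := gmin j.
  exact: Hjmin Hi Hinz H.
have gnz : forall i, exists s, g i s /\ s <> 0.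
  by move=> i; have [_ [s [gs s0]] _] := gmin i; exists s.
split; last first.
  move=> k f [fv fd fna].
  have hci : forall i, exists t, ~ (forall x, g t x -> f i x).
    move=> i; apply: NNPP => H.
    have [_ _ fnl] := fv i; apply: fnl.
    apply: (large_of_contains (g := g)) => // t x gx.
    apply: NNPP => H2; apply: H; exists t => H3; apply: H2; exact: H3.
  have [c Hc] := ClassicalEpsilon.choice _ hci.
  have cinj : injective c.
    move=> i j E; case: (eqVneq i j) => // ij; exfalso.
    have [fis _ _] := fv i; have [fjs _ _] := fv j.
    have Hl : large (sub_sum (f i) (f j)).
      apply: NNPP => H; apply: (fna i j); split => //; exact: fd.
    have := contains_of_large (sum_sub fis fjs) Hl (gmin (c i)).
    move=> /(min_union hcomul fis fjs (gmin (c i)))[H|H].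
      exact: (Hc i H).
    rewrite E in H; exact: (Hc j H).
  have := leq_card c cinj; by rewrite !card_ord.
have [V [K [[Vs Vnz Vnl] _ _ _]]] := hnonnull.
have [S [Smin SV]] := exists_min hcomul Vs Vnz.
have [tt0 Htt0] := gall S Smin.
have [tt1 Htt1] : exists tt1, ~ (forall x, g tt1 x -> V x).
  apply: NNPP => H; apply: Vnl.
  apply: (large_of_contains (g := g)) => // t x gx.
  apply: NNPP => H2; apply: H; exists t => H3; apply: H2; exact: H3.
have ttt01 : tt0 != tt1.
  apply/eqP => E; apply: Htt1; rewrite -E => x gx; apply: SV; exact: (Htt0 x).2.
have other : forall i : 'I_n, exists j, j != i.
  move=> i; case: (eqVneq i tt0) => [->|itt0]; first by exists tt1; rewrite eq_sym.
  by exists tt0; rewrite eq_sym.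
have pairs : forall p : 'I_n * 'I_n, exists a : R, p.1 != p.2 ->
    AnnR (g p.2) a /\ exists s, g p.1 s /\ a *: s <> 0.
  move=> [i j] /=; case: (eqVneq i j) => [_|ij]; first by exists 0.
  have [gjs _ _] := gmin j.
  have nsub : ~ (forall x, g i x -> g j x) by move=> H; move: ij; rewrite (gsub i j H) eqxx.
  have [a [s [Aa [gs As]]]] := not_sub_ann hcomul gjs nsub.
  by exists a => _; split => //; exists s.
have [a Ha] := ClassicalEpsilon.choice _ pairs.
pose Pi := fun (i : 'I_n) (r : R) => forall j, j != i -> forall x, g j x -> r *: x = 0.
pose f := fun i : 'I_n => @annM R M (Pi i).
pose ri := fun i : 'I_n => \prod_(j | j != i) a (i, j).
have ri_in : forall i, Pi i (ri i).
  move=> i j ji x gx; rewrite /ri (bigD1 j) //= mulrC -scalerA.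
  have ij : (i, j).1 != (i, j).2 by rewrite /= eq_sym.
  have [Aa _] := Ha (i, j) ij.
  by rewrite (Aa x gx) scaler0.
have ri_nz : forall i t, g i t -> t <> 0 -> ri i *: t <> 0.
  move=> i; rewrite /ri.
  apply: (big_ind (fun r => forall t, g i t -> t <> 0 -> r *: t <> 0)).
  - by move=> t _ tnz; rewrite scale1r.
  - move=> x y Kx Ky t gt tnz; rewrite -scalerA; apply: Kx; last exact: Ky.
    by have [[_ _ gsc] _ _] := gmin i; apply: gsc.
  - move=> j ji t gt tnz.
    have ij : (i, j).1 != (i, j).2 by rewrite /= eq_sym.
    have [_ [s [gs As]]] := Ha (i, j) ij.
    exact: (min_nz (gmin i) gs As gt tnz).
have gi_not : forall i, ~ (forall x, g i x -> f i x).
  move=> i H; have [s [gs s0]] := gnz i.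
  by apply: (ri_nz i s gs s0); apply: (H s gs); apply: ri_in.
have gj_in : forall i j, j != i -> forall x, g j x -> f i x.
  by move=> i j ji x gx r Pr; exact: (Pr j ji x gx).
have fsub : forall i, is_submodule (f i) by move=> i; apply: annM_sub.
exists f; split.
- move=> i; split; first exact: fsub.
  + have [j ji] := other i; have [s [gs s0]] := gnz j.
    by exists s; split => //; apply: (gj_in i j ji).
  + move=> Hl; apply: (gi_not i).
    exact: (contains_of_large (fsub i) Hl (gmin i)).
- move=> i j ij E; apply: (gi_not j) => x gx.
  apply (E x).1; apply: (gj_in i j) => //; by rewrite eq_sym.
- move=> i j [_ _ ne nl]; apply: nl.
  case: (eqVneq i j) => [ij|ij]; first by exfalso; apply: ne; rewrite ij.
  apply: (large_of_contains (g := g)) => // k x gx.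
  case: (eqVneq k i) => [ki|ki].
    have kj : k != j by rewrite ki.
    by exists 0, x; split; [by move=> r _; rewrite scaler0 | split; [apply: (gj_in j k kj) | rewrite add0r]].
  by exists x, 0; split; [apply: (gj_in i k ki) | split; [by move=> r _; rewrite scaler0 | rewrite addr0]].
Qed.
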